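(* Let $S=\mathcal{M}^0(I,J,G,P)$ be a regular Rees matrix semigroup, let $\sigma=\sigma_1\oplus\cdots\oplus\sigma_r$ where $\sigma_1,\dots,\sigma_r$ is a complete set of pairwise inequivalent irreducible matrix representations of $G$, and let $(\pi^l,\pi^r)$ be the associated standard representations (a pair of matrix Schützenberger representations of $S$). (1) If $\pi^l$ and $\pi^r$ are both semiunitary, then $S$ is an inverse semigroup. (2) If $*$ is an involution on $S$ and $\pi^l,\pi^r$ are both semiunitary $*$-representations, then $S$ is an inverse semigroup and for every $s\in S$, $s^{*}$ is the inverse of $s$ (i.e. $ss^{*}s=s$ and $s^{*}ss^{*}=s^{*}$).
   Context: $G$ is a finite group, $G^0=G\cup\{0\}$, $I=\{1,\dots,m\}$, $J=\{1,\dots,n\}$, $P=(p_{ji})$ an $n\times m$ matrix over $G^0$. $\mathcal{M}^0(I,J,G,P)$ consists of elements $(a)_{ij}$ ($a\in G$, $i\in I$, $j\in J$) and a zero, with $(a)_{ij}\circ(b)_{kl}=(ap_{jk}b)_{il}$ if $p_{jk}\ne0$, else $0$; regular means every row and column of $P$ has a nonzero entry. For a matrix representation $\sigma:G\to GL_k(\mathbb{C})$ extended by $\sigma(0)=0$: $\pi^l((a)_{ij})$ is the $m\times m$ block matrix with $(i,l)$ block $\sigma(ap_{jl})$ ($l\in I$) and other blocks $0$; $\pi^r((a)_{ij})$ is the $n\times n$ block matrix with $(l,j)$ block $\sigma(p_{li}a)$ ($l\in J$) and other blocks $0$; both send $0\mapsto 0$. A matrix representation $\pi$ is semiunitary if $\pi(s)\pi(s)^{*}\pi(s)=\pi(s)$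 for all $s$, and a $*$-representation (for an involution $*$ on $S$, i.e. a bijection with $a^{**}=a$, $(ab)^{*}=b^{*}a^{*}$) if $\pi(s^{*})=\pi(s)^{*}$, where $^{*}$ on matrices is conjugate transpose. An inverse semigroup is one in which each $a$ has a unique $b$ with $aba=a$, $bab=b$. *)

(* Defs.v *)
From mathcomp Require Import all_boot all_order all_algebra all_fingroup all_character.
Set Implicit Arguments. Unset Strict Implicit. Unset Printing Implicit Defensive.
Import GRing.Theory Num.Theory.
Local Open Scope ring_scope.

(* Rees matrix semigroup M^0(I,J,G,P) with I = 'I_m, J = 'I_n;
   (a)_{ij} is Some (a,i,j) and the zero is None.
   P : 'I_n -> 'I_m -> option gT is the sandwich matrix (None = 0). *)
Definition rees (gT : finGroupType) (m n : nat) := option (gT * 'I_m * 'I_n)%type.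

Definition rees_mul (gT : finGroupType) (m n : nat) (P : 'I_n -> 'I_m -> option gT)
  (s t : rees gT m n) : rees gT m n :=
  match s, t with
  | Some (a, i, j), Some (b, k, l) =>
      match P j k with
      | Some p => Some ((a * p * b)%g, i, l)
      | None => None
      end
  | _, _ => None
  end.

Definition regular_sandwich (gT : finGroupType) (m n : nat)
  (P : 'I_n -> 'I_m -> option gT) : Prop :=
  (forall j : 'I_n, exists i : 'I_m, P j i <> None) /\
  (forall i : 'I_m, exists j : 'I_n, P j i <> None).

Definition ext0 (gT : finGroupType) (C : nzRingType) (k : nat)
  (sigma : gT -> 'M[C]_k) (x : option gT) : 'M[C]_k :=
  if x is Some g then sigma g else 0.

Definition pi_l (gT : finGroupType) (C : nzRingType) (m n k : nat)
  (P : 'I_n -> 'I_m -> option gT) (sigma : gT -> 'M[C]_k) (s : rees gT m n)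
  : 'M[C]_(\sum_(i < m) k) :=
  match s with
  | Some (a, i, j) =>
      \mxblock_(i0 < m, l < m)
        (if i0 == i then ext0 sigma (omap (fun p => (a * p)%g) (P j l)) else 0)
  | None => 0
  end.

Definition pi_r (gT : finGroupType) (C : nzRingType) (m n k : nat)
  (P : 'I_n -> 'I_m -> option gT) (sigma : gT -> 'M[C]_k) (s : rees gT m n)
  : 'M[C]_(\sum_(j < n) k) :=
  match s with
  | Some (a, i, j) =>
      \mxblock_(l < n, j0 < n)
        (if j0 == j then ext0 sigma (omap (fun p => (p * a)%g) (P l i)) else 0)
  | None => 0
  end.

Definition adjmx (C : numClosedFieldType) (p q : nat) (A : 'M[C]_(p, q)) : 'M[C]_(q, p) :=
  (map_mx (fun x => x^*) A)^T.

Definition semiunitary (C : numClosedFieldType) (T : Type) (p : nat)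
  (pi : T -> 'M[C]_p) : Prop :=
  forall s, pi s *m adjmx (pi s) *m pi s = pi s.

Definition is_involution (T : Type) (mul : T -> T -> T) (star : T -> T) : Prop :=
  (forall a, star (star a) = a) /\ (forall a b, star (mul a b) = mul (star b) (star a)).

Definition star_rep (C : numClosedFieldType) (T : Type) (p : nat)
  (star : T -> T) (pi : T -> 'M[C]_p) : Prop :=
  forall s, pi (star s) = adjmx (pi s).

Definition inverse_semigroup (T : Type) (mul : T -> T -> T) : Prop :=
  forall a, exists! b, mul (mul a b) a = a /\ mul (mul b a) b = b.

Definition complete_irr_set (gT : finGroupType) (C : fieldType) (r : nat)
  (d : 'I_r -> nat) (sig : forall i : 'I_r, mx_representation C [set: gT]%G (d i)) : Prop :=
  [/\ forall i, mx_irreducible (sig i),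
      forall i j, i != j -> ~ mx_rsim (sig i) (sig j) &
      forall p (rho : mx_representation C [set: gT]%G p),
        mx_irreducible rho -> exists i, mx_rsim rho (sig i)].

Definition dsum_rep (gT : finGroupType) (C : fieldType) (r : nat)
  (d : 'I_r -> nat) (sig : forall i : 'I_r, mx_representation C [set: gT]%G (d i))
  (g : gT) : 'M[C]_(\sum_(i < r) d i) :=
  \mxdiag_(i < r) (sig i g).

(* Main.v *)
Require Import Defs.
From mathcomp Require Import all_boot all_order all_algebra all_fingroup all_solvable all_character.
From Stdlib Require Import Classical.
Set Implicit Arguments. Unset Strict Implicit. Unset Printing Implicit Defensive.
Import GRing.Theory Num.Theory.
Local Open Scope ring_scope.

Section Faith.
Variables (C : numClosedFieldType) (gT : finGroupType) (r : nat) (d : 'I_r -> nat)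
  (sig : forall i : 'I_r, mx_representation C [set: gT]%G (d i)).
Hypothesis Hc : complete_irr_set sig.

Lemma charG : ([pchar C]^'.-group [set: gT])%g.
Proof. by apply/pgroupP=> p _; rewrite inE /= pchar_num. Qed.

Lemma allker (g : gT) : (forall i, sig i g = 1%:M) ->
  forall p (rho : mx_representation C [set: gT]%G p), rho g = 1%:M.
Proof.
move=> Hg p; elim: p {-2}p (leqnn p) => [|N IH] p Hp rho.
  by move: rho; rewrite leqn0 in Hp; move/eqP: Hp => -> rho; apply/matrixP => [[]].
have [Hc1 _ Hc3] := Hc.
case: (classic (mx_irreducible rho)) => Hirr.
  have [i Hs] := Hc3 _ _ Hirr.
  have : g \in rker (sig i) by apply/rkerP; split; [rewrite inE | exact: Hg].
  by rewrite -(rker_mx_rsim Hs) => /rkerP [].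
case: (posnP p) => [p0|ppos].
  by move: rho Hirr Hp; rewrite p0 => rho _ _; apply/matrixP => [[]].
have [U [modU [nzU nfU]]] : exists U : 'M_p, [/\ mxmodule rho U, U != 0 & ~~ row_full U].
  apply: NNPP => Hno; apply: Hirr; split; first exact: mxmodule1.
    by rewrite -mxrank_eq0 mxrank1 -lt0n.
  move=> U modU _ nzU; apply: NNPP => Hn; apply: Hno; exists U; split => //.
  by rewrite -sub1mx; apply/negP.
have [W modW defUW dxUW] := mx_Maschke_pchar rho charG modU (submx1 U).
have rkUW : (\rank U + \rank W)%N = p.
  by rewrite -(mxrank_disjoint_sum (mxdirect_addsP dxUW)) defUW mxrank1.
have rkU : (\rank U < p)%N.
  by rewrite ltn_neqAle rank_leq_col andbT; move: nfU; rewrite /row_full.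
have rkW : (\rank W < p)%N.
  by rewrite -[X in (_ < X)%N]rkUW -{1}(add0n (\rank W)) ltn_add2r lt0n mxrank_eq0.
have fixmod : forall V : 'M_p, mxmodule rho V -> (\rank V <= N)%N -> V *m rho g = V.
  move=> V modV hV; have h1 := IH _ hV (submod_repr modV).
  have : g \in rker (submod_repr modV) by apply/rkerP; split; [rewrite inE|].
  by rewrite rker_submod => /setIdP [_ /eqP].
have fU := fixmod U modU (leq_trans rkU Hp).
have fW := fixmod W modW (leq_trans rkW Hp).
have : (1%:M <= U + W)%MS by rewrite defUW.
case/sub_addsmxP => u Hu.
by rewrite -[rho g]mul1mx Hu mulmxDl -!mulmxA fU fW.
Qed.

Lemma faithful_sig (g : gT) : (forall i, sig i g = 1%:M) -> g = 1%g.
Proof.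
move=> Hg; have h := allker Hg (regular_repr C [set: gT]).
have : g \in rker (regular_repr C [set: gT]) by apply/rkerP; split; [rewrite inE|].
by move/(subsetP (regular_mx_faithful C [set: gT])); rewrite inE => /eqP.
Qed.

Lemma triv_repr_mx : mx_repr [set: gT] (fun _ : gT => (1%:M : 'M[C]_1)).
Proof. by split => // x y _ _; rewrite mulmx1. Qed.

Definition triv_repr := MxRepresentation triv_repr_mx.

Lemma triv_irr : mx_irreducible triv_repr.
Proof.
split; first exact: mxmodule1.
  by rewrite -mxrank_eq0 mxrank1.
move=> U _ _ nzU; rewrite sub1mx /row_full eqn_leq rank_leq_col /=.
by rewrite lt0n mxrank_eq0.
Qed.

Lemma triv_comp : exists i0, (0 < d i0)%N /\ forall g, sig i0 g = 1%:M.
Proof.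
have [_ _ Hc3] := Hc.
have [i Hs] := Hc3 _ _ triv_irr.
exists i; split; first by rewrite -(mxrank_rsim Hs).
have [B [B' HBB' HB]] := mx_rsim_def (mx_rsim_sym Hs).
have E : forall g, sig i g = B *m B'.
  by move=> g; rewrite HB ?inE //= mulmx1.
by move=> g; rewrite E -(E 1%g) repr_mx1.
Qed.
End Faith.

Section Blocks.
Variable C : numClosedFieldType.
Variables (p : nat) (p_ : 'I_p -> nat).
Notation sb A x z := (@submxblock C p p p_ p_ A x z).
Notation sp := (\sum_i p_ i)%N.

Lemma sb_mul (A B : 'M[C]_sp) x z :
  sb (A *m B) x z = \sum_y sb A x y *m sb B y z.
Proof. by rewrite -{1}[A]submxblockK -{1}[B]submxblockK mul_mxblock mxblockK. Qed.

Lemma sb_adj (A : 'M[C]_sp) x z : sb (adjmx A) x z = adjmx (sb A z x).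
Proof. by apply/matrixP => k l; rewrite !mxE. Qed.

Lemma adjmx0 q1 q2 : adjmx (0 : 'M[C]_(q1, q2)) = 0.
Proof. by apply/matrixP => k l; rewrite !mxE conjC0. Qed.

Lemma adjmx_scalar q (c : C) : adjmx (c%:M : 'M[C]_q) = (c^*)%:M.
Proof.
apply/matrixP => k l; rewrite !mxE eq_sym.
by case: (k == l); rewrite ?mulr1n ?mulr0n ?conjC0.
Qed.

Lemma sb_diag_neq (D : forall i, 'M[C]_(p_ i)) i j : i != j -> sb (mxdiag D) i j = 0.
Proof. by move=> ne; rewrite /mxdiag mxblockK (negbTE ne). Qed.

Lemma sb_diag_mul (D : forall i, 'M[C]_(p_ i)) (M : 'M[C]_sp) i k :
  sb (mxdiag D *m M) i k = D i *m sb M i k.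
Proof. by rewrite -{1}[M]submxblockK mul_mxdiag_mxblock mxblockK. Qed.

Lemma adj_mxdiag (D : forall i, 'M[C]_(p_ i)) :
  adjmx (mxdiag D) = mxdiag (fun i => adjmx (D i)).
Proof.
rewrite -[LHS]submxblockK /mxdiag; apply/eq_mxblock => i j.
rewrite sb_adj mxblockK eq_sym; case: eqVneq => [->|ne]; last by rewrite adjmx0.
by rewrite !conform_mx_id.
Qed.

Lemma sb_diag3 (D E F : forall i, 'M[C]_(p_ i)) i :
  sb (mxdiag D *m adjmx (mxdiag E) *m mxdiag F) i i = D i *m adjmx (E i) *m F i.
Proof.
by rewrite adj_mxdiag -mulmxA sb_diag_mul sb_diag_mul submxblock_diag mulmxA.
Qed.

End Blocks.

Section RowCol.
Variable C : numClosedFieldType.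
Variables (p K : nat).
Notation sb A x z := (@submxblock C p p (fun _ => K) (fun _ => K) A x z).

Lemma sum_ifr a b c (F : 'I_p -> 'M[C]_(a, b)) (G : 'I_p -> 'M[C]_(b, c)) i :
  \sum_y F y *m (if y == i then G y else 0) = F i *m G i.
Proof.
rewrite (bigD1 i) //= eqxx big1 ?addr0 // => y ne.
by rewrite (negbTE ne) mulmx0.
Qed.

Lemma sum_ifl a b c (F : 'I_p -> 'M[C]_(a, b)) (G : 'I_p -> 'M[C]_(b, c)) i :
  \sum_y (if y == i then F y else 0) *m G y = F i *m G i.
Proof.
rewrite (bigD1 i) //= eqxx big1 ?addr0 // => y ne.
by rewrite (negbTE ne) mul0mx.
Qed.

Notation RB B i := (\mxblock_(x < p, l < p) ((if x == i then B l else 0) : 'M[C]_K)).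
Notation CB B j := (\mxblock_(l < p, j1 < p) ((if j1 == j then B l else 0) : 'M[C]_K)).

Lemma rowblk_su (B : 'I_p -> 'M[C]_K) i x l' :
  sb (RB B i *m adjmx (RB B i) *m RB B i) x l' =
    if x == i then (\sum_l B l *m adjmx (B l)) *m B l' else 0.
Proof.
set A := RB B i.
have HA : forall y l, sb A y l = if y == i then B l else 0 by move=> y l; exact: mxblockK.
rewrite sb_mul.
transitivity (\sum_y sb (A *m adjmx A) x y *m (if y == i then B l' else 0)).
  by apply: eq_bigr => y _; rewrite HA.
rewrite (sum_ifr _ (fun _ => B l')) sb_mul.
case: eqVneq => [->|ne].
  congr (_ *m _); apply: eq_bigr => l _; by rewrite sb_adj !HA eqxx.
by rewrite big1 ?mul0mx // => l _; rewrite HA (negbTE ne) mul0mx.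
Qed.

Lemma colblk_su (B : 'I_p -> 'M[C]_K) j l' j0 :
  sb (CB B j *m adjmx (CB B j) *m CB B j) l' j0 =
    if j0 == j then B l' *m (\sum_y adjmx (B y) *m B y) else 0.
Proof.
set A := CB B j.
have HA : forall y l, sb A y l = if l == j then B y else 0 by move=> y l; exact: mxblockK.
rewrite sb_mul.
have E : forall y, sb (A *m adjmx A) l' y = B l' *m adjmx (B y).
  move=> y; rewrite sb_mul.
  transitivity (\sum_x (if x == j then B l' else 0) *m adjmx (B y)).
    by apply: eq_bigr => x _; rewrite HA sb_adj HA; case: (x == j); rewrite ?mul0mx.
  by rewrite (sum_ifl (fun _ => B l') (fun _ => adjmx (B y))).
case: eqVneq => [->|ne].
  rewrite mulmx_sumr; apply: eq_bigr => y _; by rewrite E HA eqxx mulmxA.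
by rewrite big1 // => y _; rewrite HA (negbTE ne) mulmx0.
Qed.
End RowCol.

Lemma sum_single (C : numClosedFieldType) q a b (i : 'I_q) (F : 'I_q -> 'M[C]_(a, b)) :
  (forall l, l != i -> F l = 0) -> \sum_l F l = F i.
Proof. by move=> H; rewrite (bigD1 i) //= big1 ?addr0. Qed.

Section Main.
Variables (C : numClosedFieldType) (gT : finGroupType) (m n : nat)
  (P : 'I_n -> 'I_m -> option gT) (r : nat) (d : 'I_r -> nat)
  (sig : forall i : 'I_r, mx_representation C [set: gT]%G (d i)).
Hypotheses (Hreg : regular_sandwich P) (Hc : complete_irr_set sig).
Notation K := (\sum_(i < r) d i)%N.
Notation sigma := (dsum_rep sig).

Lemma ext0_diag x : ext0 sigma x = mxdiag (fun i => ext0 (sig i) x).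
Proof. by case: x => [g|] //=; rewrite mxdiag0. Qed.

Lemma ext0_triv i0 (Hi0 : forall g, sig i0 g = 1%:M) (f : gT -> gT) (x : option gT) :
  ext0 (sig i0) (omap f x) = ((x != None)%:R)%:M.
Proof. case: x => [g|] //=. by apply/matrixP=> i j; rewrite !mxE mul0rn. Qed.

Lemma sb_single i0 (Hi0 : forall g, sig i0 g = 1%:M) f (x : option gT) :
  @submxblock C r r d d (ext0 sigma (omap f x)) i0 i0 = ((x != None)%:R)%:M.
Proof. by rewrite ext0_diag submxblock_diag ext0_triv. Qed.

Lemma sb_triple i0 (Hi0 : forall g, sig i0 g = 1%:M) f g h (x y z : option gT) :
  @submxblock C r r d d (ext0 sigma (omap f x) *m adjmx (ext0 sigma (omap g y))
     *m ext0 sigma (omap h z)) i0 i0 =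
  ((x != None)%:R * ((y != None)%:R)^* * (z != None)%:R)%:M.
Proof.
by rewrite !ext0_diag sb_diag3 !ext0_triv // adjmx_scalar -!scalar_mxM.
Qed.

Lemma scalar_sum_eq q (k : 'I_q) I (F : I -> C) (e : seq I) c :
  \sum_(x <- e) (F x)%:M = c%:M :> 'M[C]_q -> \sum_(x <- e) F x = c.
Proof.
move=> H; have := congr1 (fun M : 'M[C]_q => M k k) H; rewrite summxE !mxE eqxx mulr1n.
by under eq_bigr do rewrite mxE eqxx mulr1n.
Qed.

Lemma count_uniq q (b : 'I_q -> bool) l1 l2 : b l1 -> b l2 ->
  (\sum_l ((b l)%:R * ((b l)%:R)^* * (b l1)%:R) : C) = (b l1)%:R -> l2 = l1.
Proof.
move=> h1 h2.
have E : forall l, ((b l)%:R * ((b l)%:R)^* * (b l1)%:R : C) = (b l : nat)%:R.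
  by move=> l; rewrite h1 conjC_nat -!natrM; case: (b l).
under eq_bigr do rewrite E.
rewrite h1.
rewrite -natr_sum => /eqP; rewrite eqr_nat => /eqP Hs.
apply/eqP; apply: contraT => ne.
move: Hs; rewrite (bigD1 l1) //= (bigD1 l2) //= h1 h2.
by case: (\sum_(i < q | (i != l1) && (i != l2)) b i)%N.
Qed.

Lemma count_uniq2 q (b : 'I_q -> bool) l1 l2 : b l1 -> b l2 ->
  (\sum_l ((b l1)%:R * ((b l)%:R)^* * (b l)%:R) : C) = (b l1)%:R -> l2 = l1.
Proof.
move=> h1 h2 H; apply: (count_uniq h1 h2); rewrite -[RHS]H.
by apply: eq_bigr => l _; rewrite !conjC_nat mulrC mulrA.
Qed.

Lemma colU : semiunitary (pi_r P sigma) ->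
  forall i k1 k2, P k1 i <> None -> P k2 i <> None -> k2 = k1.
Proof.
move=> Hs i k1 k2 h1 h2.
have [i0 [di0 Hi0]] := triv_comp Hc.
have H := Hs (Some (1%g, i, k1)).
have H2 := congr1 (fun M => @submxblock C n n (fun _ => K) (fun _ => K) M k1 k1) H.
simpl in H2.
rewrite colblk_su mxblockK eqxx in H2.
have H3 := congr1 (fun M => @submxblock C r r d d M i0 i0) H2.
simpl in H3.
rewrite mulmx_sumr submxblock_sum (eq_bigr _ (fun k _ => congr1 (fun M => @submxblock C r r d d M i0 i0) (mulmxA _ _ _))) in H3.
rewrite (eq_bigr _ (fun k _ => sb_triple Hi0 _ _ _ _ _ _)) sb_single // in H3.
have := scalar_sum_eq (Ordinal di0) H3.
by apply: count_uniq2; apply/eqP.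
Qed.

Lemma rowU : semiunitary (pi_l P sigma) ->
  forall j l1 l2, P j l1 <> None -> P j l2 <> None -> l2 = l1.
Proof.
move=> Hs j l1 l2 h1 h2.
have [i0 [di0 Hi0]] := triv_comp Hc.
have H := Hs (Some (1%g, l1, j)).
have H2 := congr1 (fun M => @submxblock C m m (fun _ => K) (fun _ => K) M l1 l1) H.
simpl in H2.
rewrite rowblk_su mxblockK eqxx in H2.
have H3 := congr1 (fun M => @submxblock C r r d d M i0 i0) H2.
simpl in H3.
rewrite mulmx_suml submxblock_sum (eq_bigr _ (fun k _ => sb_triple Hi0 _ _ _ _ _ _)) sb_single // in H3.
have := scalar_sum_eq (Ordinal di0) H3.
by apply: count_uniq; apply/eqP.
Qed.


Lemma rees_mul0r x : rees_mul P x None = None.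
Proof. by case: x => [[[? ?] ?]|]. Qed.

Lemma grp_solve (a g h b : gT) : (a * g * b * h * a = a)%g -> b = (g^-1 * a^-1 * h^-1)%g.
Proof.
move=> E; apply: (mulgI (a * g)%g); apply: (mulIg (h * a)%g).
rewrite !mulgA E.
by rewrite !(mulgKV, mulgK, mulVg, mulgV, mul1g).
Qed.

Lemma inv_sg :
  (forall j l1 l2, P j l1 <> None -> P j l2 <> None -> l2 = l1) ->
  (forall i k1 k2, P k1 i <> None -> P k2 i <> None -> k2 = k1) ->
  inverse_semigroup (rees_mul P).
Proof.
move=> RU CU [[[a i] j]|]; last first.
  exists None; split => //= y [_]; by rewrite rees_mul0r.
have [l hl] := Hreg.1 j; have [k hk] := Hreg.2 i.
case E1: (P j l) hl => [gj|] // _; case E2: (P k i) hk => [gk|] // _.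
exists (Some ((gj^-1 * a^-1 * gk^-1)%g, l, k)); split.
  rewrite /= E1 /= E2 /= E1 /=.
  by split; rewrite !mulgA !(mulgKV, mulgK, mulVg, mulgV, mul1g).
move=> [[[b l'] k']|] [H1 H2]; last by move: H1; rewrite /= ?rees_mul0r.
move: H1 => /=.
case E3: (P j l') => [g1|]; last by [].
case E4: (P k' i) => [g2|]; rewrite /= E4; last by case.
move=> [Hg].
have el : l' = l by apply: (RU j); rewrite ?E1 ?E3.
have ek : k' = k by apply: (CU i); rewrite ?E2 ?E4.
subst l' k'; move: E3 E4; rewrite E1 E2 => [[e1] [e2]]; subst g1 g2.
by rewrite (grp_solve Hg).
Qed.

Lemma adjmxK q1 q2 (A : 'M[C]_(q1, q2)) : adjmx (adjmx A) = A.
Proof. by apply/matrixP => k l; rewrite !mxE conjCK. Qed.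

Lemma one_neq0 q : (0 < q)%N -> (1%:M : 'M[C]_q) <> 0.
Proof.
move=> q0 H; have := congr1 (fun M : 'M[C]_q => M (Ordinal q0) (Ordinal q0)) H.
by rewrite /= !mxE eqxx mulr1n => /eqP; rewrite oner_eq0.
Qed.

Lemma unit_adj c h :
  sig c h *m adjmx (sig c h) *m sig c h = sig c h -> adjmx (sig c h) = sig c h^-1%g.
Proof.
move=> E; have U : sig c h \in unitmx by apply: repr_mx_unit; rewrite inE.
have E2 : adjmx (sig c h) *m sig c h = 1%:M.
  by rewrite -[LHS](mulKmx U) (mulmxA (sig c h)) E mulVmx.
by rewrite repr_mxV ?inE // -[LHS](mulmxK U) E2 mul1mx.
Qed.

Lemma star0 (star : rees gT m n -> rees gT m n) :
  is_involution (rees_mul P) star -> star None = None.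
Proof.
move=> [H1 H2].
have E : star None = star (rees_mul P None (star None)) by [].
by rewrite E H2 H1.
Qed.

Notation sbm M x z := (@submxblock C m m (fun _ => K) (fun _ => K) M x z).
Notation sbr M x z := (@submxblock C r r d d M x z).

Lemma star_inv (star : rees gT m n -> rees gT m n) :
  is_involution (rees_mul P) star -> semiunitary (pi_l P sigma) ->
  star_rep star (pi_l P sigma) ->
  (forall j l1 l2, P j l1 <> None -> P j l2 <> None -> l2 = l1) ->
  forall s, rees_mul P (rees_mul P s (star s)) s = s /\
            rees_mul P (rees_mul P (star s) s) (star s) = star s.
Proof.
move=> Hinv Hsl Hst RU [[[a i] j]|]; last by rewrite (star0 Hinv).
have [i0 [di0 Hi0]] := triv_comp Hc.
have Hl := Hst (Some (a, i, j)).
case E: (star (Some (a, i, j))) Hl => [[[b i'] j']|] Hl; last first.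
  have [l hl] := Hreg.1 j.
  have H0 : pi_l P sigma (Some (a, i, j)) = 0 by rewrite -[LHS]adjmxK -Hl /= adjmx0.
  have := congr1 (fun M => sbm M i l) H0; rewrite /= mxblockK eqxx submxblock0.
  move/(congr1 (fun M => sbr M i0 i0)); rewrite sb_single // submxblock0.
  by case: (P j l) hl => // g _; rewrite /= mulr1n => /(one_neq0 di0).
have [l hl] := Hreg.1 j'.
have H1 := congr1 (fun M => sbm M i' l) Hl; simpl in H1.
rewrite mxblockK eqxx sb_adj mxblockK in H1.
have el : l = i.
  apply/eqP; apply: contraT => ne; rewrite (negbTE ne) adjmx0 in H1.
  move: H1 => /(congr1 (fun M => sbr M i0 i0)); rewrite sb_single // submxblock0.
  by case: (P j' l) hl => // g _; rewrite /= mulr1n => /(one_neq0 di0).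
subst l; rewrite eqxx in H1.
case Eg': (P j' i) hl H1 => [g'|] // _ H1.
case Eg1: (P j i') H1 => [g1|] H1; last first.
  move: H1 => /(congr1 (fun M => sbr M i0 i0)); rewrite adjmx0 submxblock0 /=.
  by rewrite /dsum_rep submxblock_diag Hi0 => /(one_neq0 di0).
simpl in H1.
have Hc1 : forall c, sig c (b * g')%g = adjmx (sig c (a * g1)%g).
  by move=> c; have := congr1 (fun M => sbr M c c) H1; rewrite /dsum_rep adj_mxdiag !submxblock_diag.
have H := Hsl (Some (a, i, j)).
have H2 := congr1 (fun M => sbm M i i') H; simpl in H2.
rewrite rowblk_su mxblockK eqxx in H2.
rewrite (@sum_single _ _ _ _ i') in H2; last first.
  move=> l ne; case El: (P j l) => [gl|]; last by rewrite /= mul0mx.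
  by move: ne; rewrite (RU j i' l) ?El ?Eg1 ?eqxx.
rewrite Eg1 /= in H2.
have Hu : forall c, adjmx (sig c (a * g1)%g) = sig c ((a * g1)^-1)%g.
  move=> c; apply: unit_adj.
  by have := congr1 (fun M => sbr M c c) H2; rewrite /dsum_rep sb_diag3 submxblock_diag.
have Hf : (b * g' * (a * g1))%g = 1%g.
  apply: (faithful_sig Hc) => c.
  by rewrite repr_mxM ?inE // Hc1 Hu -repr_mxM ?inE // mulVg repr_mx1.
have hx : (b * g')%g = (a * g1)^-1%g by apply: (mulIg (a * g1)%g); rewrite mulVg.
rewrite /= Eg1 /= Eg' /= Eg1 /=; split; congr Some.
  by rewrite -(mulgA (a * g1)%g b g') hx mulgV mul1g.
by rewrite -(mulgA (b * g')%g a g1) Hf mul1g.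
Qed.
End Main.

Theorem mainTheorem7 (C : numClosedFieldType) (gT : finGroupType) (m n : nat)
  (P : 'I_n -> 'I_m -> option gT) (r : nat) (d : 'I_r -> nat)
  (sig : forall i : 'I_r, mx_representation C [set: gT]%G (d i)) :
  regular_sandwich P ->
  complete_irr_set sig ->
  (semiunitary (pi_l P (dsum_rep sig)) /\ semiunitary (pi_r P (dsum_rep sig)) ->
     inverse_semigroup (rees_mul P)) /\
  (forall star : rees gT m n -> rees gT m n,
     is_involution (rees_mul P) star ->
     semiunitary (pi_l P (dsum_rep sig)) -> semiunitary (pi_r P (dsum_rep sig)) ->
     star_rep star (pi_l P (dsum_rep sig)) -> star_rep star (pi_r P (dsum_rep sig)) ->
     inverse_semigroup (rees_mul P) /\
     (forall s, rees_mul P (rees_mul P s (star s)) s = s /\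
                rees_mul P (rees_mul P (star s) s) (star s) = star s)).
Proof.
move=> Hreg Hc.
have IS : semiunitary (pi_l P (dsum_rep sig)) -> semiunitary (pi_r P (dsum_rep sig)) ->
    inverse_semigroup (rees_mul P).
  move=> Hsl Hsr; apply: inv_sg => //.
    by move=> j l1 l2; apply: (rowU Hc Hsl).
  by move=> i k1 k2; apply: (colU Hc Hsr).
split; first by case.
move=> star Hinv Hsl Hsr Hstl Hstr; split; first exact: IS.
apply: (star_inv Hreg Hc Hinv Hsl Hstl) => j l1 l2; exact: (rowU Hc Hsl).
Qed.
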